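(* Let $Q$ be a set and let $\{*_\alpha\}_{\alpha\in\Lambda}$ be a family of quandle operations on $Q$ that are pairwise distributive with respect to each other, i.e. $(a*_\alpha b)*_\beta c=(a*_\beta c)*_\alpha(b*_\beta c)$ for all $\alpha,\beta\in\Lambda$ and $a,b,c\in Q$. Let $F$ be the free group on the symbols $*_\alpha$, $\alpha\in\Lambda$. For $w\in F$ written as a word $s_1\cdots s_k$ with each $s_i\in\{*_\alpha,*_\alpha^{-1}:\alpha\in\Lambda\}$, define $\star_w\colon Q\times Q\to Q$ by $$a\star_w b=(\cdots((a\,s_1\,b)\,s_2\,b)\cdots)\,s_k\,b,$$ where the letter $*_\alpha^{-1}$ acts as the right inverse operation $\bar*_\alpha$ of $*_\alpha$ (and the empty word gives $a\star_e b=a$). Then every $(Q,\star_w)$, $w\in F$, is a quandle, and the set $\{(Q,\star_w)\mid w\in F\}$ is closed under quandle multiplication.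
   Context: A quandle operation on $Q$ is a binary operation $*$ with $x*x=x$, unique right division, and $(x*y)*z=(x*z)*(y*z)$. The right inverse $\bar*$ of $*$ is defined by $a=c*b\iff c=a\,\bar*\,b$. The (quandle) multiplication of two groupoid structures $(Q,\circ)$ and $(Q,* )$ on the same set is $(Q,\circ)(Q,* )=(Q,\circ* )$, where $a\,(\circ* )\,b=(a\circ b)*b$. *)

(* Defs.v *)
From mathcomp Require Import all_boot.
Set Implicit Arguments. Unset Strict Implicit. Unset Printing Implicit Defensive.

Definition binop (Q : Type) := Q -> Q -> Q.

Definition is_quandle (Q : Type) (op : binop Q) : Prop :=
  [/\ forall x, op x x = x,
      forall a b, exists c, op c b = a /\ forall c', op c' b = a -> c' = c
    & forall x y z, op (op x y) z = op (op x z) (op y z)].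

Definition is_right_inverse (Q : Type) (op inv : binop Q) : Prop :=
  forall a b c, a = op c b <-> c = inv a b.

Definition qmul (Q : Type) (o s : binop Q) : binop Q :=
  fun a b => s (o a b) b.

(* Letters of the free group on L: (al, true) is op al, (al, false) is its inverse letter. *)
Definition letter (L : Type) := (L * bool)%type.

Fixpoint reduced (L : Type) (s : seq (letter L)) : Prop :=
  match s with
  | x :: ((y :: _) as t) => ~ (x.1 = y.1 /\ x.2 <> y.2) /\ reduced t
  | _ => True
  end.

Definition free_group (L : Type) := { s : seq (letter L) | reduced s }.

Definition star_word (L Q : Type) (op inv : L -> binop Q)
  (s : seq (letter L)) : binop Q :=
  fun a b => foldl (fun x l => if l.2 then op l.1 x b else inv l.1 x b) a s.

Definition star (L Q : Type) (op inv : L -> binop Q) (w : free_group L) : binop Q :=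
  star_word op inv (proj1_sig w).

(* Main.v *)
From Stdlib Require Import Classical.
Require Import Defs.
From mathcomp Require Import all_boot.

Section S.
Variables (Q L : Type) (op inv : L -> binop Q).
Hypothesis hq : forall al, is_quandle (op al).
Hypothesis hinv : forall al, is_right_inverse (op al) (inv al).
Hypothesis hdist : forall al be a b c,
      op be (op al a b) c = op al (op be a c) (op be b c).

Lemma inv_op al c b : inv al (op al c b) b = c.
Proof. by symmetry; apply/(hinv al). Qed.
Lemma op_inv al a b : op al (inv al a b) b = a.
Proof. by symmetry; apply/(hinv al). Qed.

Definition step (l : letter L) x b := if l.2 then op l.1 x b else inv l.1 x b.
Definition unstep (l : letter L) x b := if l.2 then inv l.1 x b else op l.1 x b.

Lemma sw_cons l s a b : star_word op inv (l :: s) a b = star_word op inv s (step l a b) b.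
Proof. by []. Qed.

Lemma step_unstep l x b : step l (unstep l x b) b = x.
Proof. by rewrite /step /unstep; case: l.2; rewrite ?op_inv ?inv_op. Qed.
Lemma unstep_step l x b : unstep l (step l x b) b = x.
Proof. by rewrite /step /unstep; case: l.2; rewrite ?op_inv ?inv_op. Qed.

Definition uns s a b := foldr (fun l x => unstep l x b) a s.

Lemma sw_uns s a b : star_word op inv s (uns s a b) b = a.
Proof. elim: s a => // l s IH a. rewrite sw_cons. change (uns (l::s) a b) with (unstep l (uns s a b) b). by rewrite step_unstep IH. Qed.
Lemma uns_sw s a b : uns s (star_word op inv s a b) b = a.
Proof. elim: s a => // l s IH a. rewrite sw_cons. change (unstep l (uns s (star_word op inv s (step l a b) b) b) b = a). by rewrite IH unstep_step. Qed.

Definition morph (f : Q -> Q) :=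
  (forall al x y, f (op al x y) = op al (f x) (f y)) /\
  (forall al x y, f (inv al x y) = inv al (f x) (f y)).

Lemma morph_step l z : morph (fun x => step l x z).
Proof.
rewrite /step; case: l.2; split => al x y /=.
- by rewrite hdist.
- apply/(hinv al). by rewrite -hdist op_inv.
- apply/esym/(hinv l.1). by rewrite hdist !op_inv.
- apply/esym/(hinv l.1); apply/esym/(hinv al).
  by rewrite -{2}(op_inv l.1 y z) -hdist op_inv op_inv.
Qed.

Lemma morph_sw f t x y : morph f ->
  f (star_word op inv t x y) = star_word op inv t (f x) (f y).
Proof.
move=> [Ho Hi]; elim: t x => //= l t IH x.
rewrite IH /step; by case: l.2; rewrite ?Ho ?Hi.
Qed.

Lemma sw_dist s t x y z : star_word op inv s (star_word op inv t x y) z =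
  star_word op inv t (star_word op inv s x z) (star_word op inv s y z).
Proof.
elim: s x y => // l s IH x y.
rewrite !sw_cons (@morph_sw (fun x => step l x z)); last exact: morph_step.
exact: IH.
Qed.

Lemma sw_quandle s : is_quandle (star_word op inv s).
Proof.
split.
- move=> x; elim: s => // l s IH; rewrite sw_cons.
  have -> : step l x x = x.
    rewrite /step; case: l.2; first by case: (hq l.1).
    by apply/esym/(hinv l.1); case: (hq l.1) => ->.
  exact: IH.
- move=> a b; exists (uns s a b); split; first exact: sw_uns.
  by move=> c' <-; rewrite uns_sw.
- move=> x y z; exact: sw_dist.
Qed.

Lemma reduced_tl (m : letter L) t : reduced (m :: t) -> reduced t.
Proof. by case: t => //= ? ? []. Qed.

Lemma reduce s : exists r, reduced r /\
  forall a b, star_word op inv r a b = star_word op inv s a b.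
Proof.
elim: s => [|l s [r [Hr Hs]]]; first by exists [::].
case: r Hr Hs => [|m t] Hr Hs.
  exists [:: l]; split => // a b; by rewrite [RHS]sw_cons -Hs.
case: (classic (l.1 = m.1 /\ l.2 <> m.2)) => [[E1 E2]|N].
  exists t; split; first exact: reduced_tl Hr.
  move=> a b; rewrite [RHS]sw_cons -Hs sw_cons.
  congr star_word.
  rewrite /step -E1; case: l E1 E2 => l1 [] /= _; case: m.2 => // _;
  by rewrite ?op_inv ?inv_op.
exists (l :: m :: t); split => // a b.
by rewrite [RHS]sw_cons -Hs.
Qed.

End S.

Theorem theorem4p12 (Q L : Type) (op inv : L -> binop Q)
  (hq : forall al, is_quandle (op al))
  (hinv : forall al, is_right_inverse (op al) (inv al))
  (hdist : forall al be a b c,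
      op be (op al a b) c = op al (op be a c) (op be b c)) :
  (forall w : free_group L, is_quandle (star op inv w)) /\
  (forall w1 w2 : free_group L, exists w3 : free_group L,
      forall a b, star op inv w3 a b = qmul (star op inv w1) (star op inv w2) a b).
Proof.
split.
  move=> w; exact: sw_quandle.
move=> [s1 h1] [s2 h2].
have [r [Hr Hs]] := @reduce Q L op inv hinv (s1 ++ s2).
exists (exist _ r Hr) => a b.
by rewrite /star /qmul /= Hs /star_word foldl_cat.
Qed.
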